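(* Let $B$ be a real $Q\times Q$ matrix that is symmetric, positive definite, and satisfies $B_{pq}\le0$ for $p\ne q$, and assume $\rho\in\mathcal R(\mathcal S^e,\pi^e,e\in\mathcal E)$. Let $(t_c)_{c\ge1}$ be an increasing unbounded sequence of times with $\lim_{c\to\infty}X(t_c)/t_c=\eta\ne0$. Let $(s_c)_{c\ge1}$ be times satisfying: 1. $s_c<t_c$ for each $c$, and $\lim_{c\to\infty}(t_c-s_c)/t_c=\epsilon\in(0,1)$; 2. for each $c$ and almost every $t\in(s_c,t_c]$, the applied service vector satisfies $\langle S(t),B\eta\rangle=\max_{S'\in\mathcal S^{e(t)}}\langle S',B\eta\rangle$. Then there is a subsequence $(s_d)$ of $(s_c)$ along which $X(s_d)/s_d\to\psi$ for some $\psi\in\mathbb R^Q_{\ge0}$ with $\langle\psi,B\eta\rangle>\langle\eta,B\eta\rangle$ and $\langle\psi,B\psi\rangle>\langle\eta,B\eta\rangle$. In particular, $$\limsup_{t\to\infty}\Big\langle\frac{X(t)}{t},B\frac{X(t)}{t}\Big\rangle>\langle\eta,B\eta\rangle .$$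
   Context: Fix integers $Q\ge1$ and $E\ge1$; queues are indexed by $q\in\mathcal Q=\{1,\dots,Q\}$ and environment states by $e\in\mathcal E=\{1,\dots,E\}$. For each $e$, $\mathcal S^e\subset\mathbb R^Q$ is a finite nonempty complete set of service vectors (components may be negative). Complete means that if $S\in\mathcal S^e$ and $S_q>0$, then replacing $S_q$ by $0$ gives a vector in $\mathcal S^e$. An environment trace is a measurable map $e:[0,\infty)\to\mathcal E$ with time proportions $\pi^e=\lim_{t\to\infty}\frac1t\int_0^t\mathbf 1\{e(z)=e\}\,dz>0$, where $\sum_e\pi^e=1$. The cumulative arrival $N(t)\in\mathbb R^Q_{\ge0}$ is componentwise nondecreasing with left limits, with traffic load $\rho=\lim_{t\to\infty}N(t)/t$. A schedule is a measurable map $S:[0,\infty)\to\mathbb R^Q$ with $S(t)\in\mathcal S^{e(t)}$. The workload is $X(t)=X(0)+N(t)-\int_0^tS(z)\,dz\ge0$. The stability region is $$\mathcal R(\mathcal S^e,\pi^e,e\in\mathcal E)=\Big\{\rho\in\mathbb R^Q_{\ge0}:\rho\le\sum_e\pi^e\sum_{S\in\mathcal S^e}\phi^e_SS \text{ for some } \phi^e_S\ge0,\ \sum_{S\in\mathcal S^e}\phi^e_S=1\Big\},$$ where the inequality is componentwise. *)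

(* Defs.v *)
From Stdlib Require Import Reals Lra List.
Open Scope R_scope.

(* Vectors in R^Q are functions nat -> R; only indices q < Q matter. *)
Fixpoint fsum (n : nat) (f : nat -> R) : R :=
  match n with O => 0 | S n' => fsum n' f + f n' end.

Definition dot (Q : nat) (x y : nat -> R) : R := fsum Q (fun q => x q * y q).

Definition mulmv (Q : nat) (B : nat -> nat -> R) (x : nat -> R) : nat -> R :=
  fun p => fsum Q (fun q => B p q * x q).

Definition outer_le (A : R -> Prop) (m : R) : Prop :=
  forall eps, 0 < eps ->
  exists a b : nat -> R,
    (forall n, a n <= b n) /\
    (forall x, A x -> exists n, a n <= x <= b n) /\
    (forall N, sum_f_R0 (fun n => b n - a n) N <= m + eps).

Definition is_outer (A : R -> Prop) (m : R) : Prop :=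
  outer_le A m /\ forall m', outer_le A m' -> m <= m'.

(* Caratheodory measurability (test sets of infinite outer measure satisfy the
   criterion trivially, so only finite ones are tested). *)
Definition measurable (A : R -> Prop) : Prop :=
  forall (T : R -> Prop) mT mA mB,
    is_outer T mT ->
    is_outer (fun x => T x /\ A x) mA ->
    is_outer (fun x => T x /\ ~ A x) mB ->
    mT = mA + mB.

Definition has_measure (A : R -> Prop) (m : R) : Prop :=
  measurable A /\ is_outer A m.

Definition null (A : R -> Prop) : Prop := outer_le A 0.

(* Lebesgue integral over (a,b] of a finitely-valued function f, as a simple
   function: I = sum over its values v of v * Leb{z in (a,b] | f z = v}.
   (The hypotheses require the level sets to be measurable.) *)
Definition simple_integral (f : R -> R) (a b I : R) : Prop :=
  exists L : list (R * R),
    NoDup (map fst L) /\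
    (forall z, a < z <= b -> In (f z) (map fst L)) /\
    (forall p, In p L -> has_measure (fun z => a < z <= b /\ f z = fst p) (snd p)) /\
    I = fold_right (fun p acc => fst p * snd p + acc) 0 L.

Definition lim_infty (f : R -> R) (l : R) : Prop :=
  forall eps, 0 < eps -> exists T, forall t, T <= t -> Rabs (f t - l) < eps.

Definition inS (Q : nat) (L : list (nat -> R)) (v : nat -> R) : Prop :=
  exists w, In w L /\ forall q, (q < Q)%nat -> v q = w q.

Definition complete (Q : nat) (L : list (nat -> R)) : Prop :=
  forall v, In v L -> forall q, (q < Q)%nat -> 0 < v q ->
    inS Q L (fun p => if Nat.eqb p q then 0 else v p).

Definition in_region (Q E : nat) (Sset : nat -> list (nat -> R)) (pi : nat -> R)
  (rho : nat -> R) : Prop :=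
  (forall q, (q < Q)%nat -> 0 <= rho q) /\
  exists phi : nat -> nat -> R,
    (forall k i, (k < E)%nat -> (i < length (Sset k))%nat -> 0 <= phi k i) /\
    (forall k, (k < E)%nat -> fsum (length (Sset k)) (phi k) = 1) /\
    (forall q, (q < Q)%nat ->
       rho q <= fsum E (fun k => pi k *
                  fsum (length (Sset k)) (fun i => phi k i * nth i (Sset k) (fun _ => 0) q))).

(* limsup_{t -> oo} f t > a  (in the extended reals): there is b > a such that
   f t > b for arbitrarily large t. *)
Definition limsup_infty_gt (f : R -> R) (a : R) : Prop :=
  exists b, a < b /\ forall T, exists t, T <= t /\ b < f t.

(* Main.v *)
Require Import Defs.
From Stdlib Require Import Reals List.
From Stdlib Require Import Lra Lia ZArith Permutation Classical ClassicalEpsilon FunctionalExtensionality PropExtensionality.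
Open Scope R_scope.


Ltac sext := apply functional_extensionality; let z := fresh "z" in intro z; apply propositional_extensionality.

Definition mu (A : R -> Prop) : R := epsilon (inhabits 0) (fun m => is_outer A m).
Definition bounded (A : R -> Prop) : Prop := exists m, outer_le A m.

Lemma outer_nonneg A m : outer_le A m -> 0 <= m.
Proof.
  intros H. destruct (Rle_lt_dec 0 m) as [h|h]; auto.
  destruct (H (- m / 2)) as [a [b [H1 [_ H3]]]]; [lra|].
  specialize (H3 O). simpl in H3. specialize (H1 O). lra.
Qed.

Lemma outer_exists A m0 : outer_le A m0 -> exists m, is_outer A m.
Proof.
  intros H0.
  set (E := fun x => outer_le A (- x)).
  assert (Hb : bound E).
  { exists 0. intros x Hx. apply outer_nonneg in Hx. lra. }
  assert (Hne : exists x, E x). { exists (- m0). unfold E. rewrite Ropp_involutive. auto. }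
  destruct (completeness E Hb Hne) as [l [Hl1 Hl2]].
  exists (- l). split.
  - intros eps Heps.
    assert (exists x, E x /\ l - eps/2 < x) as [x [Ex Hx]].
    { apply NNPP. intro Hn. assert (l <= l - eps/2); [|lra].
      apply Hl2. intros x Ex. destruct (Rle_lt_dec x (l - eps/2)); auto.
      exfalso. apply Hn. exists x. split; auto. }
    destruct (Ex (eps/2)) as [a [b [h1 [h2 h3]]]]; [lra|].
    exists a, b. split; [auto|split;[auto|]]. intros N. specialize (h3 N). lra.
  - intros m' Hm'. assert (E (- m')). { unfold E. rewrite Ropp_involutive. auto. }
    apply Hl1 in H. lra.
Qed.

Lemma mu_spec A : bounded A -> is_outer A (mu A).
Proof.
  intros [m Hm]. unfold mu. apply epsilon_spec. eapply outer_exists; eauto.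
Qed.

Lemma mu_eq A m : is_outer A m -> mu A = m.
Proof.
  intros H. assert (H' : is_outer A (mu A)) by (apply mu_spec; exists m; apply H).
  destruct H as [H1 H2]. destruct H' as [H1' H2'].
  apply Rle_antisym; auto.
Qed.

Lemma outer_mono (A B : R -> Prop) m : (forall z, A z -> B z) -> outer_le B m -> outer_le A m.
Proof.
  intros Hs H eps Heps. destruct (H eps Heps) as [a [b [h1 [h2 h3]]]].
  exists a, b. split; auto.
Qed.

Lemma bounded_mono (A B : R -> Prop) : (forall z, A z -> B z) -> bounded B -> bounded A.
Proof. intros Hs [m Hm]. exists m. eapply outer_mono; eauto. Qed.

Lemma mu_le_outer A m : outer_le A m -> mu A <= m.
Proof. intros H. destruct (mu_spec A) as [_ H2]; [exists m; auto|]. auto. Qed.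

Lemma mu_ge0 A : bounded A -> 0 <= mu A.
Proof. intros Hb. destruct (mu_spec A Hb) as [H1 _]. eapply outer_nonneg; eauto. Qed.

Lemma mu_le (A B : R -> Prop) : (forall z, A z -> B z) -> bounded B -> mu A <= mu B.
Proof.
  intros Hs Hb. apply mu_le_outer. eapply outer_mono; eauto. apply mu_spec; auto.
Qed.

Lemma mu_null (A B : R -> Prop) : null A -> (forall z, B z -> A z) -> mu B = 0.
Proof.
  intros Hn Hs. assert (H : outer_le B 0) by (eapply outer_mono; eauto).
  apply Rle_antisym. apply mu_le_outer; auto. apply mu_ge0. exists 0; auto.
Qed.

Lemma interval_outer (A : R -> Prop) a b : a <= b -> (forall z, A z -> a <= z <= b) -> outer_le A (b - a).
Proof.
  intros Hab Hs eps Heps.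
  exists (fun n => match n with O => a | _ => 0 end), (fun n => match n with O => b | _ => 0 end).
  split; [intros [|n]; lra|split].
  - intros x Hx. exists O. auto.
  - intros N. induction N; simpl; lra.
Qed.

Lemma bounded_interval (A : R -> Prop) a b : (forall z, A z -> a <= z <= b) -> bounded A.
Proof.
  intros Hs. destruct (Rle_lt_dec a b).
  - exists (b - a). apply interval_outer; auto.
  - exists 0. replace 0 with (a - a) by ring. apply interval_outer; [lra|].
    intros z Hz. apply Hs in Hz. lra.
Qed.

Lemma null_empty : null (fun _ => False).
Proof.
  intros eps Heps. exists (fun _ => 0), (fun _ => 0). split; [intros; lra|split].
  - intros x [].
  - intros N. induction N; simpl; lra.
Qed.

Lemma mu_empty (B : R -> Prop) : (forall z, ~ B z) -> mu B = 0.
Proof. intros H. eapply mu_null. apply null_empty. intros z Hz. apply (H z Hz). Qed.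

Lemma mu_split (P T : R -> Prop) : measurable P -> bounded T ->
  mu T = mu (fun z => T z /\ P z) + mu (fun z => T z /\ ~ P z).
Proof.
  intros HP Hb. unfold measurable in HP. apply (HP T); apply mu_spec; auto;
  apply (bounded_mono _ T); auto; simpl; tauto.
Qed.

Lemma meas_use (P : R -> Prop) : (forall T, bounded T ->
   mu T = mu (fun z => T z /\ P z) + mu (fun z => T z /\ ~ P z)) -> measurable P.
Proof.
  intros H T mT mA mB H1 H2 H3.
  rewrite <- (mu_eq _ _ H1), <- (mu_eq _ _ H2), <- (mu_eq _ _ H3).
  apply H. destruct H1 as [H1 _]. exists mT; auto.
Qed.

Lemma meas_compl (P : R -> Prop) : measurable P -> measurable (fun z => ~ P z).
Proof.
  intros HP. apply meas_use. intros T Hb. rewrite (mu_split P T HP Hb).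
  replace (fun z => T z /\ ~ ~ P z) with (fun z => T z /\ P z).
  - ring.
  - sext. split; intros [h1 h2]; split; auto. apply NNPP; auto.
Qed.

Lemma meas_inter (A B : R -> Prop) : measurable A -> measurable B -> measurable (fun z => A z /\ B z).
Proof.
  intros HA HB. apply meas_use. intros T Hb.
  rewrite (mu_split A T HA Hb).
  rewrite (mu_split B (fun z => T z /\ A z) HB); [|eapply bounded_mono; eauto; simpl; tauto].
  rewrite (mu_split A (fun z => T z /\ ~ (A z /\ B z)) HA); [|eapply bounded_mono; eauto; simpl; tauto].
  replace (fun z => (T z /\ A z) /\ B z) with (fun z => T z /\ (A z /\ B z)) by (sext; tauto).
  replace (fun z => (T z /\ ~ (A z /\ B z)) /\ A z) with (fun z => (T z /\ A z) /\ ~ B z) by (sext; tauto).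
  replace (fun z => (T z /\ ~ (A z /\ B z)) /\ ~ A z) with (fun z => T z /\ ~ A z) by (sext; tauto).
  ring.
Qed.

Lemma meas_union (A B : R -> Prop) : measurable A -> measurable B -> measurable (fun z => A z \/ B z).
Proof.
  intros HA HB.
  replace (fun z => A z \/ B z) with (fun z => ~ (~ A z /\ ~ B z)).
  - apply meas_compl, meas_inter; apply meas_compl; auto.
  - sext. split; [intro H; apply NNPP; tauto|tauto].
Qed.

Lemma meas_empty : measurable (fun _ => False).
Proof.
  apply meas_use. intros T Hb.
  rewrite (mu_empty (fun z => T z /\ False)) by tauto.
  replace (fun z => T z /\ ~ False) with T by (sext; tauto). ring.
Qed.

Lemma meas_union_list {X : Type} (l : list X) (P : X -> R -> Prop) :
  (forall x, In x l -> measurable (P x)) -> measurable (fun z => exists x, In x l /\ P x z).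
Proof.
  induction l as [|x l IH]; intros H.
  - replace (fun z => exists y, In y nil /\ P y z) with (fun _ : R => False).
    apply meas_empty. sext. split; [tauto|]. intros [y [[] _]].
  - replace (fun z => exists y, In y (x :: l) /\ P y z) with (fun z => P x z \/ exists y, In y l /\ P y z).
    + apply meas_union. apply H; simpl; auto. apply IH. intros; apply H; simpl; auto.
    + sext. split.
      * intros [h|[y [h1 h2]]]. exists x; simpl; auto. exists y; simpl; auto.
      * intros [y [[h1|h1] h2]]. subst; auto. right; exists y; auto.
Qed.

Definition lsum (F : R -> R) (l : list R) : R := fold_right (fun x acc => F x + acc) 0 l.
Definition IntL (D : R -> Prop) (f : R -> R) (V : list R) : R :=
  lsum (fun v => v * mu (fun z => D z /\ f z = v)) V.

Lemma lsum_ext_in F G l : (forall x, In x l -> F x = G x) -> lsum F l = lsum G l.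
Proof.
  induction l; simpl; intros H; auto. rewrite H, IHl; auto.
Qed.

Lemma lsum_plus F G l : lsum (fun x => F x + G x) l = lsum F l + lsum G l.
Proof. induction l; simpl; auto. lra. rewrite IHl. ring. Qed.

Lemma lsum_scal c F l : lsum (fun x => c * F x) l = c * lsum F l.
Proof. induction l; simpl; [ring|]. rewrite IHl. ring. Qed.

Lemma lsum_app F l1 l2 : lsum F (l1 ++ l2) = lsum F l1 + lsum F l2.
Proof. induction l1; simpl; [ring|]. rewrite IHl1. ring. Qed.

Lemma lsum_swap (F : R -> R -> R) l1 l2 :
  lsum (fun x => lsum (fun y => F x y) l2) l1 = lsum (fun y => lsum (fun x => F x y) l1) l2.
Proof.
  induction l1; simpl.
  - induction l2; simpl; auto. rewrite <- IHl2. ring.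
  - rewrite IHl1. rewrite <- lsum_plus. auto.
Qed.

Lemma lsum_perm F l1 l2 : Permutation l1 l2 -> lsum F l1 = lsum F l2.
Proof.
  induction 1; simpl; auto. rewrite IHPermutation; auto. ring. congruence.
Qed.

Lemma lsum_filter F l (p : R -> bool) : (forall x, In x l -> p x = false -> F x = 0) ->
  lsum F l = lsum F (filter p l).
Proof.
  induction l; simpl; intros H; auto.
  destruct (p a) eqn:E; simpl; rewrite IHl; auto.
  rewrite H; auto. ring.
Qed.

Definition inb (l : list R) (x : R) : bool := if in_dec Req_EM_T x l then true else false.

Lemma lsum_indep F l1 l2 : NoDup l1 -> NoDup l2 ->
  (forall x, ~ In x l1 -> F x = 0) -> (forall x, ~ In x l2 -> F x = 0) ->
  lsum F l1 = lsum F l2.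
Proof.
  intros N1 N2 H1 H2.
  rewrite (lsum_filter F l1 (inb l2)).
  2:{ intros x _ h. unfold inb in h. destruct (in_dec Req_EM_T x l2); try discriminate. auto. }
  rewrite (lsum_filter F l2 (inb l1)).
  2:{ intros x _ h. unfold inb in h. destruct (in_dec Req_EM_T x l1); try discriminate. auto. }
  apply lsum_perm. apply NoDup_Permutation; try apply NoDup_filter; auto.
  intros x. rewrite !filter_In. unfold inb.
  destruct (in_dec Req_EM_T x l2); destruct (in_dec Req_EM_T x l1); intuition congruence.
Qed.

Lemma lsum_single (c K : R) l : NoDup l ->
  lsum (fun v => if Req_EM_T v c then K else 0) l = if in_dec Req_EM_T c l then K else 0.
Proof.
  induction l as [|a l IH]; simpl; intros N; auto.
  inversion N; subst. rewrite IH; auto.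
  destruct (Req_EM_T a c) as [e|ne].
  - subst. destruct (in_dec Req_EM_T c l); [contradiction|].
    destruct (in_dec Req_EM_T c (c::l)) as [_|nn]; [ring| simpl in nn; tauto].
  - destruct (in_dec Req_EM_T c l) as [i|nn]; destruct (in_dec Req_EM_T c (a::l)) as [i'|n'];
    simpl in *; try ring; try tauto.
Qed.

Lemma IntL_indep D h V W : NoDup V -> NoDup W ->
  (forall z, D z -> In (h z) V) -> (forall z, D z -> In (h z) W) ->
  IntL D h V = IntL D h W.
Proof.
  intros NV NW CV CW. unfold IntL. apply lsum_indep; auto.
  - intros x Hx. rewrite mu_empty; [ring|]. intros z [Dz hz]. subst. apply Hx; auto.
  - intros x Hx. rewrite mu_empty; [ring|]. intros z [Dz hz]. subst. apply Hx; auto.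
Qed.

Lemma IntL_const D h V c : NoDup V -> (forall z, D z -> In (h z) V) ->
  (forall z, D z -> h z = c) -> IntL D h V = c * mu D.
Proof.
  intros NV CV Hc. unfold IntL.
  rewrite (lsum_ext_in _ (fun v => if Req_EM_T v c then c * mu D else 0)).
  - rewrite lsum_single; auto. destruct (in_dec Req_EM_T c V); auto.
    rewrite (mu_empty D); [ring|]. intros z Dz. apply n. rewrite <- (Hc z Dz). auto.
  - intros v Hv. destruct (Req_EM_T v c).
    + subst. f_equal. f_equal. sext. split; [tauto|]. intros; split; auto.
    + rewrite mu_empty; [ring|]. intros z [Dz hz]. apply n. rewrite <- hz. auto.
Qed.

Lemma mu_part (g : R -> R) Vg : NoDup Vg ->
  (forall w, In w Vg -> measurable (fun z => 0 <= z /\ g z = w)) ->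
  forall D, (forall z, D z -> 0 <= z /\ In (g z) Vg) -> bounded D ->
  mu D = lsum (fun w => mu (fun z => D z /\ g z = w)) Vg.
Proof.
  induction Vg as [|w Vg IH]; intros N M D C B; simpl.
  - apply mu_empty. intros z Dz. destruct (C z Dz) as [_ []].
  - inversion N; subst.
    rewrite (mu_split _ D (M w (or_introl eq_refl)) B).
    replace (fun z => D z /\ 0 <= z /\ g z = w) with (fun z => D z /\ g z = w).
    2:{ sext. split; [intros [h1 h2]; split; auto; split; auto; apply C; auto|tauto]. }
    f_equal. rewrite IH; auto.
    + apply lsum_ext_in. intros w' Hw'. f_equal. sext. split; [tauto|].
      intros [Dz gz]. split; auto. split; auto. intros [_ e]. subst. congruence.
    + intros; apply M; simpl; auto.
    + intros z [Dz Hn]. destruct (C z Dz) as [z0 [e|i]]; split; auto. exfalso; apply Hn; auto.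
    + eapply bounded_mono; [|apply B]. simpl; tauto.
Qed.

Lemma IntL_part (g : R -> R) Vg h V D : NoDup Vg ->
  (forall w, In w Vg -> measurable (fun z => 0 <= z /\ g z = w)) ->
  (forall z, D z -> 0 <= z /\ In (g z) Vg) -> bounded D ->
  IntL D h V = lsum (fun w => IntL (fun z => D z /\ g z = w) h V) Vg.
Proof.
  intros N M C B. unfold IntL.
  rewrite (lsum_ext_in _ (fun v => lsum (fun w => v * mu (fun z => (D z /\ g z = w) /\ h z = v)) Vg)).
  - apply lsum_swap.
  - intros v _. rewrite lsum_scal. f_equal.
    rewrite (mu_part g Vg N M).
    + apply lsum_ext_in. intros w _. f_equal. sext. tauto.
    + intros z [Dz _]. auto.
    + eapply bounded_mono; [|apply B]. simpl; tauto.
Qed.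

Definition SF (f : R -> R) : Prop := exists V, NoDup V /\ (forall z, 0 <= z -> In (f z) V) /\
  (forall v, measurable (fun z => 0 <= z /\ f z = v)).

Lemma IntL_add f g Vf Vg D W :
  NoDup Vf -> (forall z, 0 <= z -> In (f z) Vf) -> (forall v, measurable (fun z => 0 <= z /\ f z = v)) ->
  NoDup Vg -> (forall z, 0 <= z -> In (g z) Vg) -> (forall v, measurable (fun z => 0 <= z /\ g z = v)) ->
  (forall z, D z -> 0 <= z) -> bounded D -> NoDup W -> (forall z, D z -> In (f z + g z) W) ->
  IntL D (fun z => f z + g z) W = IntL D f Vf + IntL D g Vg.
Proof.
  intros NF CF MF NG CG MG D0 B NW CW.
  assert (Hc : forall h V, IntL D h V = lsum (fun w => lsum (fun v =>
       IntL (fun z => (D z /\ g z = w) /\ f z = v) h V) Vf) Vg).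
  { intros h V. rewrite (IntL_part g Vg h V D NG (fun w _ => MG w)); [|intros z Dz; split; auto|auto].
    apply lsum_ext_in. intros w _.
    rewrite (IntL_part f Vf h V _ NF (fun w _ => MF w)); [auto| intros z [Dz _]; split; auto
      | eapply bounded_mono; [|apply B]; simpl; tauto]. }
  rewrite !Hc. rewrite <- lsum_plus. apply lsum_ext_in. intros w _.
  rewrite <- lsum_plus. apply lsum_ext_in. intros v _.
  assert (Bc : bounded (fun z => (D z /\ g z = w) /\ f z = v)).
  { eapply bounded_mono; [|apply B]. simpl; tauto. }
  rewrite (IntL_const _ _ _ (v + w) NW); [| intros z [[Dz _] _]; auto | intros z [[Dz e1] e2]; rewrite e1, e2; ring].
  rewrite (IntL_const _ _ _ v NF); [| intros z [[Dz _] _]; auto | intros z [[Dz _] e]; auto].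
  rewrite (IntL_const _ _ _ w NG); [| intros z [[Dz _] _]; auto | intros z [[Dz e] _]; auto].
  ring.
Qed.

Lemma IntL_scale f Vf c D W :
  NoDup Vf -> (forall z, 0 <= z -> In (f z) Vf) -> (forall v, measurable (fun z => 0 <= z /\ f z = v)) ->
  (forall z, D z -> 0 <= z) -> bounded D -> NoDup W -> (forall z, D z -> In (f z * c) W) ->
  IntL D (fun z => f z * c) W = IntL D f Vf * c.
Proof.
  intros NF CF MF D0 B NW CW.
  rewrite (IntL_part f Vf _ _ _ NF (fun w _ => MF w)); [|intros z Dz; split; auto|auto].
  unfold IntL at 2. rewrite Rmult_comm, <- lsum_scal. apply lsum_ext_in. intros v _.
  rewrite (IntL_const _ _ _ (v * c) NW); [ring| intros z [Dz _]; auto | intros z [Dz e]; rewrite e; auto].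
Qed.

Lemma SF_plus f g : SF f -> SF g -> SF (fun z => f z + g z).
Proof.
  intros [Vf [NF [CF MF]]] [Vg [NG [CG MG]]].
  exists (nodup Req_EM_T (map (fun p => fst p + snd p) (list_prod Vf Vg))).
  split; [apply NoDup_nodup|split].
  - intros z Hz. apply nodup_In. apply in_map_iff. exists (f z, g z). split; auto.
    apply in_prod; auto.
  - intros u.
    replace (fun z => 0 <= z /\ f z + g z = u) with
      (fun z => exists v, In v Vf /\ ((0 <= z /\ f z = v) /\ (0 <= z /\ g z = u - v))).
    + apply meas_union_list. intros v _. apply meas_inter; auto.
    + sext. split.
      * intros [v [_ [[h1 h2] [h3 h4]]]]. split; auto. lra.
      * intros [h1 h2]. exists (f z). split; auto. split; auto. split; auto. lra.
Qed.

Lemma SF_scale f c : SF f -> SF (fun z => f z * c).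
Proof.
  intros [Vf [NF [CF MF]]].
  exists (nodup Req_EM_T (map (fun v => v * c) Vf)).
  split; [apply NoDup_nodup|split].
  - intros z Hz. apply nodup_In. apply in_map_iff. exists (f z). split; auto.
  - intros u.
    replace (fun z => 0 <= z /\ f z * c = u) with
      (fun z => exists v, In v (filter (fun v => if Req_EM_T (v * c) u then true else false) Vf)
                          /\ (0 <= z /\ f z = v)).
    + apply meas_union_list. intros v _. auto.
    + sext. split.
      * intros [v [h1 [h2 h3]]]. apply filter_In in h1. destruct h1 as [_ h1].
        destruct (Req_EM_T (v * c) u); try discriminate. subst. auto.
      * intros [h1 h2]. exists (f z). split; auto. apply filter_In. split; auto.
        destruct (Req_EM_T (f z * c) u); auto.
Qed.

Lemma fsum_ext n f g : (forall i, (i < n)%nat -> f i = g i) -> fsum n f = fsum n g.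
Proof. induction n; simpl; intros H; auto. rewrite IHn, H; auto; intros; apply H; lia. Qed.

Lemma fsum_plus n f g : fsum n (fun i => f i + g i) = fsum n f + fsum n g.
Proof. induction n; simpl; [ring|]. rewrite IHn; ring. Qed.

Lemma fsum_minus n f g : fsum n (fun i => f i - g i) = fsum n f - fsum n g.
Proof. induction n; simpl; [ring|]. rewrite IHn; ring. Qed.

Lemma fsum_scal n c f : fsum n (fun i => c * f i) = c * fsum n f.
Proof. induction n; simpl; [ring|]. rewrite IHn; ring. Qed.

Lemma fsum_scalr n c f : fsum n (fun i => f i * c) = fsum n f * c.
Proof. induction n; simpl; [ring|]. rewrite IHn; ring. Qed.

Lemma fsum_div n t f : fsum n f / t = fsum n (fun i => f i / t).
Proof. unfold Rdiv. rewrite fsum_scalr. auto. Qed.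

Lemma fsum_le n f g : (forall i, (i < n)%nat -> f i <= g i) -> fsum n f <= fsum n g.
Proof. induction n; simpl; intros H; [lra|]. apply Rplus_le_compat; [apply IHn|apply H]; intros; try apply H; lia. Qed.

Lemma fsum_zero n f : (forall i, (i < n)%nat -> f i = 0) -> fsum n f = 0.
Proof. intros H. rewrite (fsum_ext n f (fun _ => 0)); auto. clear H. induction n; simpl; auto. rewrite IHn; ring. Qed.

Lemma fsum_swap n m (f : nat -> nat -> R) :
  fsum n (fun i => fsum m (fun j => f i j)) = fsum m (fun j => fsum n (fun i => f i j)).
Proof.
  induction n; simpl.
  - symmetry. apply fsum_zero. auto.
  - rewrite IHn. rewrite <- fsum_plus. auto.
Qed.

Lemma fsum_nonneg_le n f k : (forall i, (i < n)%nat -> 0 <= f i) -> (k < n)%nat -> f k <= fsum n f.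
Proof.
  induction n; intros H Hk; [lia|]. simpl.
  assert (0 <= fsum n f).
  { rewrite <- (fsum_zero n (fun _ => 0)) by auto. apply fsum_le. intros; apply H; lia. }
  destruct (Nat.eq_dec k n).
  - subst. lra.
  - assert (f k <= fsum n f) by (apply IHn; [intros; apply H; lia|lia]).
    assert (0 <= f n) by (apply H; lia). lra.
Qed.

Lemma lsum_seq F n : lsum F (map INR (seq 0 n)) = fsum n (fun e => F (INR e)).
Proof.
  induction n; [simpl; auto|]. rewrite seq_S, map_app, lsum_app, IHn. simpl. ring.
Qed.

Lemma cv_const (a : R) : Un_cv (fun _ => a) a.
Proof. intros eps H. exists O. intros. unfold Rdist. rewrite Rminus_diag, Rabs_R0. auto. Qed.

Lemma cv_fsum n (u : nat -> nat -> R) l : (forall i, (i < n)%nat -> Un_cv (u i) (l i)) ->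
  Un_cv (fun c => fsum n (fun i => u i c)) (fsum n l).
Proof.
  induction n; intros H; simpl.
  - apply cv_const.
  - apply CV_plus. apply IHn. intros; apply H; lia. apply H; lia.
Qed.

Lemma cv_ext_ev u v l c0 : (forall c, (c0 <= c)%nat -> u c = v c) -> Un_cv u l -> Un_cv v l.
Proof.
  intros He H eps Heps. destruct (H eps Heps) as [N HN]. exists (max N c0). intros n Hn.
  rewrite <- He by lia. apply HN; lia.
Qed.

Lemma cv_scal u l c : Un_cv u l -> Un_cv (fun n => c * u n) (c * l).
Proof. intros H. apply CV_mult; auto. apply cv_const. Qed.

Lemma cv_le0 u l : (forall n, 0 <= u n) -> Un_cv u l -> 0 <= l.
Proof.
  intros H Hc. destruct (Rle_lt_dec 0 l); auto.
  destruct (Hc (- l) ltac:(lra)) as [N HN]. specialize (HN N (le_n _)). specialize (H N).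
  unfold Rdist in HN. rewrite Rabs_right in HN; lra.
Qed.

Lemma cv_le_ev u v l m c0 : (forall n, (c0 <= n)%nat -> u n <= v n) -> Un_cv u l -> Un_cv v m -> l <= m.
Proof.
  intros H Hu Hv.
  assert (Hw : Un_cv (fun n => v (n + c0)%nat - u (n + c0)%nat) (m - l)).
  { apply CV_minus; intros eps He; [destruct (Hv eps He) as [N HN]|destruct (Hu eps He) as [N HN]];
    exists N; intros n Hn; apply HN; lia. }
  apply cv_le0 in Hw; [lra|]. intros n. specialize (H (n + c0)%nat). assert (u (n+c0)%nat <= v (n+c0)%nat) by (apply H; lia). lra.
Qed.

Definition incr (phi : nat -> nat) := forall d, (phi d < phi (S d))%nat.

Lemma incr_lt phi : incr phi -> forall a b, (a < b)%nat -> (phi a < phi b)%nat.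
Proof.
  intros H a b Hab. induction Hab. apply H. specialize (H m). lia.
Qed.

Lemma incr_ge phi : incr phi -> forall d, (d <= phi d)%nat.
Proof. intros H d. induction d. lia. specialize (H d). lia. Qed.

Lemma cv_sub u l phi : incr phi -> Un_cv u l -> Un_cv (fun d => u (phi d)) l.
Proof.
  intros Hp H eps He. destruct (H eps He) as [N HN]. exists N. intros n Hn.
  apply HN. pose proof (incr_ge phi Hp n). lia.
Qed.

Lemma BW1 (u : nat -> R) M : (forall n, Rabs (u n) <= M) ->
  exists phi l, incr phi /\ Un_cv (fun d => u (phi d)) l.
Proof.
  intros HM.
  destruct (Bolzano_Weierstrass u (fun c => -M <= c <= M) (compact_P3 (-M) M)) as [l Hl].
  { intros n. specialize (HM n).
    revert HM. unfold Rabs. destruct Rcase_abs; lra. }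
  assert (Hx : forall N k : nat, exists p, (N <= p)%nat /\ Rabs (u p - l) < / (INR k + 1)).
  { intros N k.
    assert (Hk : 0 < / (INR k + 1)). { apply Rinv_0_lt_compat. pose proof (pos_INR k). lra. }
    destruct (Hl (fun x => Rabs (x - l) < / (INR k + 1)) N) as [p [Hp1 Hp2]].
    - exists (mkposreal _ Hk). intros y Hy. unfold disc in Hy. simpl in Hy. auto.
    - exists p; auto. }
  set (g := fun N k => proj1_sig (constructive_indefinite_description _ (Hx N k))).
  assert (Hg : forall N k, (N <= g N k)%nat /\ Rabs (u (g N k) - l) < / (INR k + 1)).
  { intros N k. unfold g. destruct (constructive_indefinite_description _ (Hx N k)). auto. }
  set (phi := fix phi d := match d with O => g O O | S d' => g (S (phi d')) (S d') end).
  exists phi, l. split.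
  - intros d. simpl. destruct (Hg (S (phi d)) (S d)). lia.
  - intros eps He.
    destruct (archimed (/ eps)) as [h1 _].
    assert (0 <= IZR (up (/ eps))). { pose proof (Rinv_0_lt_compat eps He). lra. }
    exists (Z.to_nat (up (/ eps))). intros n Hn. unfold Rdist.
    assert (Hp : Rabs (u (phi n) - l) < / (INR n + 1)).
    { destruct n; simpl; apply Hg. }
    assert (INR (Z.to_nat (up (/ eps))) <= INR n) by (apply le_INR; auto).
    rewrite INR_IZR_INZ, Z2Nat.id in H0. 2:{ apply le_IZR. auto. }
    apply Rlt_le_trans with (1 := Hp).
    rewrite <- (Rinv_inv eps). apply Rinv_le_contravar. apply Rinv_0_lt_compat; auto. lra.
Qed.

Lemma BWQ (u : nat -> nat -> R) Q M : (forall c q, (q < Q)%nat -> Rabs (u c q) <= M) ->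
  exists phi psi, incr phi /\ forall q, (q < Q)%nat -> Un_cv (fun d => u (phi d) q) (psi q).
Proof.
  intros HM.
  assert (forall k, (k <= Q)%nat -> exists phi psi, incr phi /\
            forall q, (q < k)%nat -> Un_cv (fun d => u (phi d) q) (psi q)).
  { induction k; intros Hk.
    - exists (fun d => d), (fun _ => 0). split. intros d; lia. intros; lia.
    - destruct IHk as [phi [psi [Hp Hc]]]; [lia|].
      destruct (BW1 (fun d => u (phi d) k) M) as [phi' [l [Hp' Hc']]]; [intros; apply HM; lia|].
      exists (fun d => phi (phi' d)), (fun q => if Nat.eqb q k then l else psi q). split.
      + intros d. apply incr_lt; auto.
      + intros q Hq. destruct (Nat.eqb_spec q k).
        * subst. auto.
        * apply (cv_sub (fun d => u (phi d) q)); auto. apply Hc. lia. }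
  apply (H Q). lia.
Qed.

Definition maxl (l : list R) : R := match l with nil => 0 | x :: l' => fold_right Rmax x l' end.

Lemma fold_max_ge a l x : In x (a :: l) -> x <= fold_right Rmax a l.
Proof.
  induction l as [|y l IH]; simpl; intros H.
  - destruct H as [e|[]]; subst; lra.
  - destruct H as [e|[e|H]].
    + eapply Rle_trans; [apply IH; left; auto|apply Rmax_r].
    + subst; apply Rmax_l.
    + eapply Rle_trans; [apply IH; right; auto|apply Rmax_r].
Qed.

Lemma maxl_ge x l : In x l -> x <= maxl l.
Proof. destruct l as [|a l]; simpl; [tauto|]. apply fold_max_ge. Qed.

Lemma maxl_in l : l <> nil -> In (maxl l) l.
Proof.
  destruct l as [|a l]; simpl; [tauto|]. intros _.
  induction l; simpl; [auto|].
  destruct (Rle_dec a0 (fold_right Rmax a l)).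
  - rewrite (Rmax_right _ _ r). destruct IHl as [h|h]; [left; auto| right; right; auto].
  - rewrite Rmax_left by lra. right; left; auto.
Qed.

Lemma dot_ext Q x y z : (forall q, (q < Q)%nat -> x q = y q) -> dot Q x z = dot Q y z.
Proof. intros H. unfold dot. apply fsum_ext. intros i Hi. rewrite H; auto. Qed.

Lemma fsum_nonpos n f : (forall i, (i < n)%nat -> f i <= 0) -> fsum n f <= 0.
Proof. induction n; simpl; intros H; [lra|]. assert (f n <= 0) by (apply H; lia).
  assert (fsum n f <= 0) by (apply IHn; intros; apply H; lia). lra. Qed.

Lemma fsum_nonneg n f : (forall i, (i < n)%nat -> 0 <= f i) -> 0 <= fsum n f.
Proof. induction n; simpl; intros H; [lra|]. assert (0 <= f n) by (apply H; lia).
  assert (0 <= fsum n f) by (apply IHn; intros; apply H; lia). lra. Qed.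

Section Region.
Variables (Q E : nat) (Sset : nat -> list (nat -> R)) (pi rho b : nat -> R).

Definition Red (S : nat -> R) : nat -> R := fun q => if Rlt_dec (b q) 0 then Rmin (S q) 0 else S q.

Lemma compl_red L S : complete Q L -> In S L -> inS Q L (Red S).
Proof.
  intros HC HS.
  assert (forall j, (j <= Q)%nat -> exists w, In w L /\ (forall q, (q < j)%nat -> w q = Red S q) /\
            (forall q, (j <= q < Q)%nat -> w q = S q)).
  { induction j; intros Hj.
    - exists S. split; auto. split; intros; auto; lia.
    - destruct IHj as [w [Hw [H1 H2]]]; [lia|].
      assert (Hwj : w j = S j) by (apply H2; lia).
      destruct (Rlt_dec (b j) 0) as [hb|hb]; [destruct (Rlt_dec 0 (w j)) as [hw|hw]|].
      + destruct (HC w Hw j ltac:(lia) hw) as [w' [Hw' Hw'2]].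
        exists w'. split; auto. split.
        * intros q Hq. rewrite <- Hw'2 by lia. destruct (Nat.eqb_spec q j).
          -- subst. unfold Red. destruct (Rlt_dec (b j) 0); [|tauto]. rewrite Rmin_right; lra.
          -- apply H1; lia.
        * intros q Hq. rewrite <- Hw'2 by lia. destruct (Nat.eqb_spec q j); [lia|]. apply H2; lia.
      + exists w. split; auto. split.
        * intros q Hq. destruct (Nat.eqb_spec q j).
          -- subst. unfold Red. destruct (Rlt_dec (b j) 0); [|tauto]. rewrite Rmin_left; lra.
          -- apply H1; lia.
        * intros; apply H2; lia.
      + exists w. split; auto. split.
        * intros q Hq. destruct (Nat.eqb_spec q j).
          -- subst. unfold Red. destruct (Rlt_dec (b j) 0); [tauto|]. auto.
          -- apply H1; lia.
        * intros; apply H2; lia. }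
  destruct (H Q (le_n _)) as [w [Hw [H1 _]]]. exists w. split; auto. intros; symmetry; auto.
Qed.

Lemma dot_red_le L S : complete Q L -> In S L -> dot Q (Red S) b <= maxl (map (fun S => dot Q S b) L).
Proof.
  intros HC HS. destruct (compl_red L S HC HS) as [w [Hw Hw2]].
  replace (dot Q (Red S) b) with (dot Q w b) by (symmetry; apply dot_ext; auto). apply maxl_ge. apply (in_map (fun S => dot Q S b)); auto.
Qed.

Definition Me k := maxl (map (fun S => dot Q S b) (Sset k)).

Lemma region : (forall k, (k < E)%nat -> complete Q (Sset k)) -> (forall k, (k < E)%nat -> 0 < pi k) ->
  in_region Q E Sset pi rho -> fsum Q (fun q => rho q * b q) <= fsum E (fun k => pi k * Me k).
Proof.
  intros HC Hpi [Hr [phi [Hp1 [Hp2 Hp3]]]].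
  set (Sk := fun k i => nth i (Sset k) (fun _ => 0)).
  apply Rle_trans with (fsum Q (fun q => fsum E (fun k => pi k *
      fsum (length (Sset k)) (fun i => phi k i * Red (Sk k i) q)) * b q)).
  { apply fsum_le. intros q Hq. destruct (Rlt_dec (b q) 0) as [hb|hb].
    - assert (fsum E (fun k => pi k * fsum (length (Sset k)) (fun i => phi k i * Red (Sk k i) q)) <= 0).
      { apply fsum_nonpos. intros k Hk.
        assert (fsum (length (Sset k)) (fun i => phi k i * Red (Sk k i) q) <= 0).
        { apply fsum_nonpos. intros i Hi.
          unfold Red. destruct (Rlt_dec (b q) 0); [|tauto].
          assert (Rmin (Sk k i q) 0 <= 0) by apply Rmin_r.
          specialize (Hp1 k i Hk Hi). nra. }
        specialize (Hpi k Hk). nra. }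
      specialize (Hr q Hq). nra.
    - assert (Hb : 0 <= b q) by lra. apply Rmult_le_compat_r; auto.
      eapply Rle_trans; [apply Hp3; auto|]. right. apply fsum_ext. intros k Hk. f_equal.
      apply fsum_ext. intros i Hi. f_equal. unfold Red. destruct (Rlt_dec (b q) 0); tauto. }
  apply Rle_trans with (fsum E (fun k => pi k * fsum (length (Sset k)) (fun i => phi k i * dot Q (Red (Sk k i)) b))).
  { right.
    rewrite (fsum_ext Q _ (fun q => fsum E (fun k => fsum (length (Sset k)) (fun i => pi k * phi k i * (Red (Sk k i) q * b q))))).
    2:{ intros q Hq. rewrite <- fsum_scalr. apply fsum_ext. intros k Hk. rewrite Rmult_assoc, <- fsum_scalr, <- fsum_scal.
        apply fsum_ext. intros i Hi. ring. }
    rewrite fsum_swap. apply fsum_ext. intros k Hk. rewrite fsum_swap. rewrite <- fsum_scal.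
    apply fsum_ext. intros i Hi. unfold dot. rewrite <- fsum_scal, <- fsum_scal. apply fsum_ext. intros q Hq. ring. }
  apply fsum_le. intros k Hk. apply Rmult_le_compat_l; [left; auto|].
  apply Rle_trans with (fsum (length (Sset k)) (fun i => phi k i * Me k)).
  - apply fsum_le. intros i Hi. apply Rmult_le_compat_l; [apply Hp1; auto|].
    apply dot_red_le; auto. apply nth_In; auto.
  - rewrite fsum_scalr, Hp2; auto. lra.
Qed.
End Region.

Lemma mulmv_ext Q B x y p : (forall q, (q < Q)%nat -> x q = y q) -> mulmv Q B x p = mulmv Q B y p.
Proof. intros H. unfold mulmv. apply fsum_ext. intros; rewrite H; auto. Qed.

Lemma dot_sym Q B x y : (forall p q, (p < Q)%nat -> (q < Q)%nat -> B p q = B q p) ->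
  dot Q x (mulmv Q B y) = dot Q y (mulmv Q B x).
Proof.
  intros HB. unfold dot, mulmv.
  rewrite (fsum_ext Q (fun q => x q * fsum Q (fun q0 => B q q0 * y q0)) (fun p => fsum Q (fun q => x p * B p q * y q))).
  2:{ intros. rewrite <- fsum_scal. apply fsum_ext. intros. ring. }
  rewrite fsum_swap. apply fsum_ext. intros q Hq. rewrite <- fsum_scal. apply fsum_ext. intros p Hp.
  rewrite HB by auto. ring.
Qed.

Lemma dot_minus_l Q x y z : dot Q (fun q => x q - y q) z = dot Q x z - dot Q y z.
Proof. unfold dot. rewrite <- fsum_minus. apply fsum_ext. intros; ring. Qed.

Lemma dot_minus_r Q x y z : dot Q x (fun q => y q - z q) = dot Q x y - dot Q x z.
Proof. unfold dot. rewrite <- fsum_minus. apply fsum_ext. intros; ring. Qed.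

Lemma mulmv_minus Q B x y : mulmv Q B (fun q => x q - y q) = fun p => mulmv Q B x p - mulmv Q B y p.
Proof. apply functional_extensionality. intros p. unfold mulmv. rewrite <- fsum_minus. apply fsum_ext. intros; ring. Qed.

Lemma quad_expand Q B x y : (forall p q, (p < Q)%nat -> (q < Q)%nat -> B p q = B q p) ->
  dot Q (fun q => x q - y q) (mulmv Q B (fun q => x q - y q)) =
  dot Q x (mulmv Q B x) - 2 * dot Q x (mulmv Q B y) + dot Q y (mulmv Q B y).
Proof.
  intros HB. rewrite mulmv_minus, dot_minus_l, !dot_minus_r.
  rewrite (dot_sym Q B y x HB). ring.
Qed.

Lemma psd Q B : (forall x : nat -> R, (exists q, (q < Q)%nat /\ x q <> 0) -> 0 < dot Q x (mulmv Q B x)) ->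
  forall x, 0 <= dot Q x (mulmv Q B x).
Proof.
  intros H x. destruct (classic (exists q, (q < Q)%nat /\ x q <> 0)) as [h|h].
  - left; auto.
  - right. symmetry. unfold dot. apply fsum_zero. intros i Hi.
    assert (x i = 0). { apply NNPP. intro. apply h. exists i; auto. } rewrite H0. ring.
Qed.

Lemma cv_dot Q (x : nat -> nat -> R) l y : (forall q, (q < Q)%nat -> Un_cv (fun d => x d q) (l q)) ->
  Un_cv (fun d => dot Q (x d) y) (dot Q l y).
Proof.
  intros H. unfold dot. apply (cv_fsum Q (fun i d => x d i * y i)). intros i Hi.
  apply CV_mult; auto. apply cv_const.
Qed.

Lemma cv_quad Q B (x : nat -> nat -> R) l : (forall q, (q < Q)%nat -> Un_cv (fun d => x d q) (l q)) ->
  Un_cv (fun d => dot Q (x d) (mulmv Q B (x d))) (dot Q l (mulmv Q B l)).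
Proof.
  intros H. unfold dot. apply (cv_fsum Q (fun i d => x d i * mulmv Q B (x d) i)). intros i Hi.
  apply CV_mult; auto. unfold mulmv. apply (cv_fsum Q (fun j d => B i j * x d j)). intros j Hj.
  apply cv_scal; auto.
Qed.

Lemma IntL_split P D f V : measurable P -> bounded D ->
  IntL D f V = IntL (fun z => D z /\ P z) f V + IntL (fun z => D z /\ ~ P z) f V.
Proof.
  intros HP B. unfold IntL. rewrite <- lsum_plus. apply lsum_ext_in. intros v _.
  rewrite (mu_split P (fun z => D z /\ f z = v) HP).
  2:{ eapply bounded_mono; [|apply B]. simpl; tauto. }
  replace (fun z => (D z /\ f z = v) /\ P z) with (fun z => (D z /\ P z) /\ f z = v) by (sext; tauto).
  replace (fun z => (D z /\ f z = v) /\ ~ P z) with (fun z => (D z /\ ~ P z) /\ f z = v) by (sext; tauto).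
  ring.
Qed.

Lemma simple_to_IntL f a b I : simple_integral f a b I ->
  exists V, NoDup V /\ (forall z, a < z <= b -> In (f z) V) /\
    I = IntL (fun z => a < z <= b) f V /\
    (forall v, In v V -> measurable (fun z => a < z <= b /\ f z = v)).
Proof.
  intros [L [N [C [M E]]]]. exists (map fst L). split; auto. split; auto. split.
  - subst I. clear N C. induction L as [|p L IH]; simpl; auto.
    unfold IntL in *. simpl. rewrite IH by (intros; apply M; simpl; auto).
    f_equal. f_equal. symmetry. apply mu_eq. apply M. simpl; auto.
  - intros v Hv. apply in_map_iff in Hv. destruct Hv as [p [e Hp]]. subst. apply M; auto.
Qed.

Lemma lsum_le F G l : (forall x, In x l -> F x <= G x) -> lsum F l <= lsum G l.
Proof. induction l; simpl; intros H; [lra|]. apply Rplus_le_compat; auto. Qed.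

Lemma IntL_lower f Vf D V C :
  NoDup Vf -> (forall z, 0 <= z -> In (f z) Vf) -> (forall v, measurable (fun z => 0 <= z /\ f z = v)) ->
  (forall z, D z -> 0 <= z) -> bounded D -> NoDup V -> (forall z, D z -> In (f z) V) ->
  (forall z, D z -> - C <= f z) -> - C * mu D <= IntL D f V.
Proof.
  intros NF CF MF D0 B NV CV HC.
  rewrite (IntL_part f Vf _ _ _ NF (fun w _ => MF w)); [|intros z Dz; split; auto|auto].
  rewrite (mu_part f Vf NF (fun w _ => MF w)); [|intros z Dz; split; auto|auto].
  rewrite <- lsum_scal. apply lsum_le. intros w _.
  rewrite (IntL_const _ _ _ w NV); [| intros z [Dz _]; auto | intros z [Dz e]; auto].
  destruct (classic (exists z, D z /\ f z = w)) as [[z [Dz e]]|h].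
  - assert (0 <= mu (fun z => D z /\ f z = w)).
    { apply mu_ge0. eapply bounded_mono; [|apply B]. simpl; tauto. }
    specialize (HC z Dz). rewrite e in HC. nra.
  - rewrite mu_empty; [lra|]. intros z Hz. apply h. exists z; auto.
Qed.

Lemma lim_comp f l (u : nat -> R) : lim_infty f l -> (forall M, exists c0, forall c, (c0 <= c)%nat -> M <= u c) ->
  Un_cv (fun c => f (u c)) l.
Proof.
  intros Hf Hu eps He. destruct (Hf eps He) as [T HT]. destruct (Hu T) as [c0 Hc0].
  exists c0. intros n Hn. unfold Rdist. apply HT. apply Hc0. lia.
Qed.

Lemma mono_seq (t : nat -> R) : (forall c, t c < t (S c)) -> forall c0 c, (c0 <= c)%nat -> t c0 <= t c.
Proof.
  intros H c0 c Hc. induction Hc. lra. specialize (H m). lra.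
Qed.

Lemma lsum_abs_ge x l : In x l -> Rabs x <= lsum Rabs l.
Proof.
  induction l; simpl; [tauto|]. intros [e|H].
  - subst. assert (0 <= lsum Rabs l). { clear. induction l; simpl; [lra|]. pose proof (Rabs_pos a); lra. } lra.
  - pose proof (Rabs_pos a). specialize (IHl H). lra.
Qed.

Lemma lsum_abs_nonneg l : 0 <= lsum Rabs l.
Proof. induction l; simpl; [lra|]. pose proof (Rabs_pos a); lra. Qed.

Lemma dot_div Q x y t : dot Q (fun q => x q / t) y = dot Q x y / t.
Proof. unfold dot. rewrite fsum_div. apply fsum_ext. intros; unfold Rdiv; ring. Qed.

Lemma div_nonneg x y : 0 <= x -> 0 <= y -> 0 <= x / y.
Proof.
  intros Hx Hy. unfold Rdiv. apply Rmult_le_pos; auto. destruct (Req_dec y 0) as [e|n].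
  - rewrite e, Rinv_0; lra.
  - left; apply Rinv_0_lt_compat; lra.
Qed.

Lemma fsum_expand4 Q x1 x2 x3 x4 b :
  fsum Q (fun q => ((x1 q - x2 q) - (x3 q - x4 q)) * b q) = dot Q x1 b - dot Q x2 b - dot Q x3 b + dot Q x4 b.
Proof.
  unfold dot. rewrite (fsum_ext Q _ (fun q => ((x1 q * b q - x2 q * b q) - x3 q * b q) + x4 q * b q)).
  - rewrite fsum_plus, !fsum_minus. ring.
  - intros; ring.
Qed.
Theorem lemma4
  (Q E : nat) (Sset : nat -> list (nat -> R))
  (env : R -> nat) (pi : nat -> R)
  (N : R -> nat -> R) (rho : nat -> R)
  (sched : R -> nat -> R) (X : R -> nat -> R)
  (B : nat -> nat -> R)
  (tc sc : nat -> R) (eta : nat -> R) (eps : R)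
  (* queues and environment states *)
  (HQ : (1 <= Q)%nat) (HE : (1 <= E)%nat)
  (HSne : forall k, (k < E)%nat -> Sset k <> nil)
  (HScomp : forall k, (k < E)%nat -> complete Q (Sset k))
  (* environment trace *)
  (Henv_range : forall t, 0 <= t -> (env t < E)%nat)
  (Henv_meas : forall k, measurable (fun z => 0 <= z /\ env z = k))
  (Hpi : forall k, (k < E)%nat -> exists occ : R -> R,
      (forall t, 0 < t -> has_measure (fun z => 0 <= z <= t /\ env z = k) (occ t)) /\
      lim_infty (fun t => occ t / t) (pi k))
  (Hpi_pos : forall k, (k < E)%nat -> 0 < pi k)
  (Hpi_sum : fsum E pi = 1)
  (* cumulative arrivals *)
  (HN_nonneg : forall t q, 0 <= t -> (q < Q)%nat -> 0 <= N t q)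
  (HN_mono : forall t1 t2 q, 0 <= t1 <= t2 -> (q < Q)%nat -> N t1 q <= N t2 q)
  (HN_left : forall t q, 0 < t -> (q < Q)%nat -> exists l, forall e', 0 < e' ->
      exists d, 0 < d /\ forall z, t - d < z < t -> Rabs (N z q - l) < e')
  (Hrho_lim : forall q, (q < Q)%nat -> lim_infty (fun t => N t q / t) (rho q))
  (* schedule *)
  (Hsched_in : forall t, 0 <= t -> inS Q (Sset (env t)) (sched t))
  (Hsched_meas : forall q c, (q < Q)%nat ->
      measurable (fun z => 0 <= z /\ sched z q = c))
  (* workload X(t) = X(0) + N(t) - int_0^t S(z) dz >= 0 *)
  (HX : forall t q, 0 <= t -> (q < Q)%nat ->
      simple_integral (fun z => sched z q) 0 t (X 0 q + N t q - X t q))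
  (HX_nonneg : forall t q, 0 <= t -> (q < Q)%nat -> 0 <= X t q)
  (* the matrix B *)
  (HB_sym : forall p q, (p < Q)%nat -> (q < Q)%nat -> B p q = B q p)
  (HB_pd : forall x : nat -> R, (exists q, (q < Q)%nat /\ x q <> 0) ->
      0 < dot Q x (mulmv Q B x))
  (HB_off : forall p q, (p < Q)%nat -> (q < Q)%nat -> p <> q -> B p q <= 0)
  (* load in the stability region *)
  (Hrho : in_region Q E Sset pi rho)
  (* the times t_c *)
  (Ht_nonneg : forall c, 0 <= tc c)
  (Ht_incr : forall c, tc c < tc (S c))
  (Ht_unb : forall M, exists c, M < tc c)
  (Heta : forall q, (q < Q)%nat -> Un_cv (fun c => X (tc c) q / tc c) (eta q))
  (Heta_nz : exists q, (q < Q)%nat /\ eta q <> 0)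
  (* the times s_c *)
  (Hs : forall c, 0 <= sc c < tc c)
  (Heps : Un_cv (fun c => (tc c - sc c) / tc c) eps)
  (Heps01 : 0 < eps < 1)
  (Hgreedy : forall c, null (fun z => sc c < z <= tc c /\
      ~ (forall S', In S' (Sset (env z)) ->
           dot Q S' (mulmv Q B eta) <= dot Q (sched z) (mulmv Q B eta)))) :
  (exists (phi : nat -> nat) (psi : nat -> R),
      (forall d, (phi d < phi (S d))%nat) /\
      (forall q, (q < Q)%nat -> 0 <= psi q) /\
      (forall q, (q < Q)%nat -> Un_cv (fun d => X (sc (phi d)) q / sc (phi d)) (psi q)) /\
      dot Q psi (mulmv Q B eta) > dot Q eta (mulmv Q B eta) /\
      dot Q psi (mulmv Q B psi) > dot Q eta (mulmv Q B eta)) /\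
  limsup_infty_gt (fun t => dot Q (fun q => X t q / t) (mulmv Q B (fun q => X t q / t)))
                  (dot Q eta (mulmv Q B eta)).
Proof.
  pose (b := mulmv Q B eta).
  pose (a := dot Q eta b).
  assert (Ha : 0 < a) by (apply HB_pd; auto).
  pose (Vall := fun q => flat_map (fun e => map (fun S : nat -> R => S q) (Sset e)) (seq 0 E)).
  assert (Hcov : forall q z, (q < Q)%nat -> 0 <= z -> In (sched z q) (Vall q)).
  { intros q z Hq Hz. destruct (Hsched_in z Hz) as [w [Hw Hw2]]. rewrite Hw2 by auto.
    apply in_flat_map. exists (env z). split.
    - apply in_seq. specialize (Henv_range z Hz). lia.
    - apply (in_map (fun S : nat -> R => S q)); auto. }
  assert (HSF : forall q, (q < Q)%nat -> SF (fun z => sched z q)).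
  { intros q Hq. exists (nodup Req_EM_T (Vall q)). split; [apply NoDup_nodup|split].
    - intros z Hz. apply nodup_In. auto.
    - intros v. apply Hsched_meas; auto. }
  pose (Cq := fun q => lsum Rabs (Vall q)).
  assert (HCq : forall q z, (q < Q)%nat -> 0 <= z -> Rabs (sched z q) <= Cq q)
    by (intros; apply lsum_abs_ge; auto).
  assert (Hint : forall s, 0 <= s -> measurable (fun z => 0 < z <= s)).
  { intros s Hs0. destruct (simple_to_IntL _ _ _ _ (HX s 0%nat Hs0 ltac:(lia))) as [V [NV [CV [_ MV]]]].
    replace (fun z => 0 < z <= s) with (fun z => exists v, In v V /\ (0 < z <= s /\ sched z 0%nat = v)).
    - apply meas_union_list; auto.
    - sext. split; [intros [v [_ [h _]]]; auto|]. intros h. exists (sched z 0%nat). split; auto. }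
  assert (Hdiff : forall s t q, 0 <= s -> s <= t -> (q < Q)%nat -> forall W, NoDup W ->
      (forall z, s < z <= t -> In (sched z q) W) ->
      IntL (fun z => s < z <= t) (fun z => sched z q) W = (N t q - X t q) - (N s q - X s q)).
  { intros s t q Hs0 Hst Hq W NW CW.
    destruct (simple_to_IntL _ _ _ _ (HX t q ltac:(lra) Hq)) as [Vt [NVt [CVt [Et _]]]].
    destruct (simple_to_IntL _ _ _ _ (HX s q Hs0 Hq)) as [Vs [NVs [CVs [Es _]]]].
    rewrite (IntL_split (fun z => 0 < z <= s)) in Et;
      [|apply Hint; auto|apply bounded_interval with 0 t; intros; lra].
    replace (fun z => (0 < z <= t) /\ (0 < z <= s)) with (fun z => 0 < z <= s) in Et by (sext; lra).
    replace (fun z => (0 < z <= t) /\ ~ (0 < z <= s)) with (fun z => s < z <= t) in Et.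
    2:{ sext. split.
        - intros h. split; [lra|]. intros h'; lra.
        - intros [h1 h2]. split; [|lra]. destruct (Rle_dec z s); [exfalso; apply h2; lra|lra]. }
    rewrite (IntL_indep _ _ Vt Vs NVt NVs) in Et; [|intros; apply CVt; lra|auto].
    rewrite (IntL_indep _ _ W Vt NW NVt CW); [|intros; apply CVt; lra].
    lra. }
  assert (Hlin : forall s t, 0 <= s -> s <= t -> forall k, (k <= Q)%nat ->
     SF (fun z => fsum k (fun q => sched z q * b q)) /\
     forall W, NoDup W -> (forall z, s < z <= t -> In (fsum k (fun q => sched z q * b q)) W) ->
     IntL (fun z => s < z <= t) (fun z => fsum k (fun q => sched z q * b q)) W =
     fsum k (fun q => ((N t q - X t q) - (N s q - X s q)) * b q)).
  { intros s t Hs0 Hst.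
    assert (BD : bounded (fun z => s < z <= t)) by (apply bounded_interval with s t; intros; lra).
    assert (D0 : forall z, s < z <= t -> 0 <= z) by (intros; lra).
    induction k; intros Hk.
    - simpl. split.
      + replace (fun _ : R => 0) with (fun z => sched z 0%nat * 0) by (apply functional_extensionality; intros; ring).
        apply SF_scale. apply HSF. lia.
      + intros W NW CW. rewrite (IntL_const _ _ _ 0 NW CW) by auto. ring.
    - destruct IHk as [[Vh [NVh [CVh MVh]]] IH]; [lia|].
      destruct (SF_scale _ (b k) (HSF k ltac:(lia))) as [Vg [NVg [CVg MVg]]].
      destruct (HSF k ltac:(lia)) as [Vk [NVk [CVk MVk]]].
      simpl. split.
      + apply (SF_plus (fun z => fsum k (fun q => sched z q * b q)) (fun z => sched z k * b k)).
        exists Vh; auto. exists Vg; auto.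
      + intros W NW CW.
        rewrite (IntL_add (fun z => fsum k (fun q => sched z q * b q)) (fun z => sched z k * b k)
                   Vh Vg _ W NVh CVh MVh NVg CVg MVg D0 BD NW CW).
        rewrite (IH Vh NVh) by (intros; apply CVh; lra).
        rewrite (IntL_scale _ Vk (b k) _ Vg NVk CVk MVk D0 BD NVg) by (intros; apply CVg; lra).
        rewrite (Hdiff s t k Hs0 Hst ltac:(lia) Vk NVk) by (intros; apply CVk; lra). ring. }
  assert (HMe : forall z, 0 <= z -> dot Q (sched z) b <= Me Q Sset b (env z)).
  { intros z Hz. destruct (Hsched_in z Hz) as [w [Hw Hw2]].
    rewrite (dot_ext Q (sched z) w b Hw2). apply maxl_ge. apply (in_map (fun S => dot Q S b)); auto. }
  assert (Hid : forall c, fsum Q (fun q => ((N (tc c) q - X (tc c) q) - (N (sc c) q - X (sc c) q)) * b q) =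
        fsum E (fun e => Me Q Sset b e * mu (fun z => (sc c < z <= tc c) /\ env z = e))).
  { intros c. destruct (Hs c) as [Hs0 Hst].
    destruct (Hlin (sc c) (tc c) Hs0 (Rlt_le _ _ Hst) Q (le_n _)) as [[Wh [NWh [CWh MWh]]] HI].
    rewrite <- (HI Wh NWh) by (intros; apply CWh; lra).
    rewrite (IntL_part (fun z => INR (env z)) (map INR (seq 0 E))).
    - rewrite lsum_seq. apply fsum_ext. intros e He.
      replace (fun z => (sc c < z <= tc c) /\ INR (env z) = INR e) with (fun z => (sc c < z <= tc c) /\ env z = e).
      2:{ sext. split; intros [h1 h2]; split; auto; first [rewrite h2; auto | apply INR_eq; auto]. }
      unfold IntL. rewrite (mu_part _ Wh NWh (fun w _ => MWh w) (fun z => (sc c < z <= tc c) /\ env z = e)).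
      + rewrite <- lsum_scal. apply lsum_ext_in. intros u _.
        destruct (Req_EM_T u (Me Q Sset b e)) as [eu|neu]; [rewrite eu; auto|].
        rewrite (mu_null _ _ (Hgreedy c)); [ring|].
        intros z [[h1 h3] h4]. split; auto. intro Hg. apply neu. rewrite <- h4.
        assert (Hz : 0 <= z) by lra.
        apply Rle_antisym.
        * rewrite <- h3. apply HMe; auto.
        * assert (Hne : map (fun S => dot Q S b) (Sset e) <> nil).
          { intro h0. apply map_eq_nil in h0. apply (HSne e He h0). }
          destruct (proj1 (in_map_iff _ _ _) (maxl_in _ Hne)) as [Sx [eS HS]].
          unfold Me. rewrite <- eS. apply Hg. rewrite h3. auto.
      + intros z [h1 h3]. split; [lra|]. apply CWh; lra.
      + apply bounded_interval with (sc c) (tc c). intros z [h _]; lra.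
    - apply FinFun.Injective_map_NoDup. intros x y; apply INR_eq. apply seq_NoDup.
    - intros w Hw. apply in_map_iff in Hw. destruct Hw as [e [ew He]]. subst w.
      replace (fun z => 0 <= z /\ INR (env z) = INR e) with (fun z => 0 <= z /\ env z = e).
      + apply Henv_meas.
      + sext. split; intros [h1 h2]; split; auto; first [rewrite h2; auto | apply INR_eq; auto].
    - intros z Dz. split; [lra|]. apply in_map. apply in_seq. specialize (Henv_range z ltac:(lra)). lia.
    - apply bounded_interval with (sc c) (tc c). intros z h; lra. }
  assert (Htpos : forall c, 0 < tc c) by (intros c; destruct (Hs c); lra).
  assert (Htinf : forall M, exists c0, forall c, (c0 <= c)%nat -> M <= tc c).
  { intros M. destruct (Ht_unb M) as [c0 Hc0]. exists c0. intros c Hc.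
    pose proof (mono_seq tc Ht_incr c0 c Hc). lra. }
  assert (Hr : Un_cv (fun c => sc c / tc c) (1 - eps)).
  { apply cv_ext_ev with (u := fun c => 1 - (tc c - sc c) / tc c) (c0 := 0%nat).
    - intros c _. field. apply Rgt_not_eq, Htpos.
    - apply CV_minus; [apply cv_const|auto]. }
  assert (Hsinf : forall M, exists c0, forall c, (c0 <= c)%nat -> M <= sc c).
  { intros M. destruct (Hr ((1 - eps)/2) ltac:(lra)) as [c1 Hc1].
    destruct (Htinf (2 * Rabs M / (1 - eps))) as [c2 Hc2].
    exists (max c1 c2). intros c Hc.
    specialize (Hc1 c ltac:(lia)). specialize (Hc2 c ltac:(lia)). unfold Rdist in Hc1.
    assert (Hrc : (1 - eps)/2 <= sc c / tc c).
    { revert Hc1. unfold Rabs. destruct Rcase_abs; intros; lra. }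
    assert (E1 : sc c = sc c / tc c * tc c) by (field; apply Rgt_not_eq, Htpos).
    assert (E2 : (1 - eps)/2 * (2 * Rabs M / (1 - eps)) = Rabs M) by (field; lra).
    pose proof (Rle_abs M). pose proof (Rabs_pos M).
    assert (0 <= 2 * Rabs M / (1 - eps)) by (apply div_nonneg; lra).
    assert ((1 - eps)/2 * (2 * Rabs M / (1 - eps)) <= sc c / tc c * tc c).
    { apply Rmult_le_compat; lra. }
    lra. }
  destruct (Hsinf 1) as [c1 Hc1].
  pose (R0 := dot Q rho b).
  pose (L := a - eps * R0 + eps * fsum E (fun e => pi e * Me Q Sset b e)).
  assert (HY : Un_cv (fun c => dot Q (X (sc c)) b / tc c) L).
  { assert (H1 : Un_cv (fun c => dot Q (fun q => X (tc c) q / tc c) b) a) by (apply cv_dot; auto).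
    assert (H2 : Un_cv (fun c => dot Q (fun q => N (tc c) q / tc c) b) R0).
    { apply cv_dot. intros q Hq. apply (lim_comp (fun t => N t q / t)); auto. }
    assert (H3 : Un_cv (fun c => dot Q (fun q => N (sc c) q / sc c) b * (sc c / tc c)) (R0 * (1 - eps))).
    { apply CV_mult; auto. apply cv_dot. intros q Hq. apply (lim_comp (fun t => N t q / t)); auto. }
    assert (H4 : Un_cv (fun c => fsum E (fun e => Me Q Sset b e * (mu (fun z => (sc c < z <= tc c) /\ env z = e) / tc c)))
                  (fsum E (fun e => Me Q Sset b e * (eps * pi e)))).
    { apply (cv_fsum E (fun e c => Me Q Sset b e * (mu (fun z => (sc c < z <= tc c) /\ env z = e) / tc c))).
      intros e He. apply cv_scal.
      destruct (Hpi e He) as [occ [Hocc1 Hocc2]].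
      assert (Hm0 : forall r, 0 < r -> mu (fun z => (0 < z <= r) /\ env z = e) = occ r).
      { intros r Hr0. destruct (Hocc1 r Hr0) as [_ Ho]. rewrite <- (mu_eq _ _ Ho).
        rewrite (mu_split (fun z => 0 < z <= r) (fun z => 0 <= z <= r /\ env z = e));
          [|apply Hint; lra|apply bounded_interval with 0 r; intros; lra].
        replace (fun z => (0 <= z <= r /\ env z = e) /\ 0 < z <= r) with (fun z => (0 < z <= r) /\ env z = e).
        2:{ sext. split.
            - intros [h1 h2]; repeat split; auto; lra.
            - intros [[h1 h2] h3]; repeat split; auto; lra. }
        rewrite (mu_null (fun z => 0 <= z <= 0) (fun z => (0 <= z <= r /\ env z = e) /\ ~ (0 < z <= r))).
        - ring.
        - assert (HN0 : outer_le (fun z => 0 <= z <= 0) (0 - 0)) by (apply interval_outer; [lra|auto]).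
          replace (0 - 0) with 0 in HN0 by ring. exact HN0.
        - intros z [[h1 h2] h3]. split; [lra|]. destruct (Rle_dec z 0); auto. exfalso; apply h3; lra. }
      replace (eps * pi e) with (pi e - pi e * (1 - eps)) by ring.
      apply cv_ext_ev with (c0 := c1) (u := fun c => occ (tc c) / tc c - occ (sc c) / sc c * (sc c / tc c)).
      - intros c Hc. specialize (Hc1 c Hc). pose proof (Hs c) as [_ Hst].
        assert (Hsp : mu (fun z => (0 < z <= tc c) /\ env z = e) =
                      mu (fun z => (0 < z <= sc c) /\ env z = e) + mu (fun z => (sc c < z <= tc c) /\ env z = e)).
        { rewrite (mu_split (fun z => 0 < z <= sc c) (fun z => (0 < z <= tc c) /\ env z = e));
            [|apply Hint; lra|apply bounded_interval with 0 (tc c); intros; lra].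
          f_equal; f_equal; sext; split.
          all: first [intros [[h1 h2] h3] | intros [h1 h2]]; repeat split; auto; try lra; try (intro; lra);
            try (destruct (Rle_dec z (sc c)) as [l|l]; [exfalso; apply h3; lra| lra]). }
        rewrite !Hm0 in Hsp by lra.
        replace (mu (fun z => (sc c < z <= tc c) /\ env z = e)) with (occ (tc c) - occ (sc c)) by lra.
        field. split; apply Rgt_not_eq; lra.
      - apply CV_minus.
        + apply (lim_comp (fun t => occ t / t)); auto.
        + apply CV_mult; auto. apply (lim_comp (fun t => occ t / t)); auto. }
    apply cv_ext_ev with (c0 := c1) (u := fun c => dot Q (fun q => X (tc c) q / tc c) b
        - dot Q (fun q => N (tc c) q / tc c) b + dot Q (fun q => N (sc c) q / sc c) b * (sc c / tc c)
        + fsum E (fun e => Me Q Sset b e * (mu (fun z => (sc c < z <= tc c) /\ env z = e) / tc c))).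
    - intros c Hc. specialize (Hc1 c Hc). specialize (Hid c). pose proof (Htpos c).
      rewrite fsum_expand4 in Hid. rewrite !dot_div.
      rewrite (fsum_ext E _ (fun e => Me Q Sset b e * mu (fun z => (sc c < z <= tc c) /\ env z = e) / tc c))
        by (intros; unfold Rdiv; ring).
      rewrite <- fsum_div. rewrite <- Hid. field. split; apply Rgt_not_eq; lra.
    - replace L with (a - R0 + R0 * (1 - eps) + fsum E (fun e => Me Q Sset b e * (eps * pi e))).
      + apply CV_plus; [apply CV_plus; [apply CV_minus|]|]; auto.
      + unfold L. rewrite (fsum_ext E _ (fun e => eps * (pi e * Me Q Sset b e))) by (intros; ring).
        rewrite fsum_scal. ring. }
  assert (HR : R0 <= fsum E (fun e => pi e * Me Q Sset b e)) by (apply region; auto).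
  assert (HL : a <= L) by (unfold L; nra).
  assert (HXb : forall s q, 0 <= s -> (q < Q)%nat -> X s q <= X 0 q + N s q + Cq q * s).
  { intros s q Hs0 Hq. destruct (simple_to_IntL _ _ _ _ (HX s q Hs0 Hq)) as [V [NV [CV [Es _]]]].
    destruct (HSF q Hq) as [Vf [NF [CF MF]]].
    assert (Hlow : - Cq q * mu (fun z => 0 < z <= s) <= IntL (fun z => 0 < z <= s) (fun z => sched z q) V).
    { apply (IntL_lower _ Vf); auto.
      - intros; lra.
      - apply bounded_interval with 0 s; intros; lra.
      - intros z Hz. specialize (HCq q z Hq ltac:(lra)). revert HCq. unfold Rabs; destruct Rcase_abs; intros; lra. }
    assert (Hmu : mu (fun z => 0 < z <= s) <= s - 0) by (apply mu_le_outer, interval_outer; [lra| intros; lra]).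
    assert (0 <= Cq q) by apply lsum_abs_nonneg.
    assert (0 <= mu (fun z => 0 < z <= s)) by (apply mu_ge0, bounded_interval with 0 s; intros; lra).
    nra. }
  assert (HNs : Un_cv (fun c => fsum Q (fun q => N (sc c) q / sc c)) (fsum Q rho)).
  { apply (cv_fsum Q (fun q c => N (sc c) q / sc c)). intros q Hq.
    apply (lim_comp (fun t => N t q / t)); auto. }
  destruct (HNs 1 ltac:(lra)) as [c2 Hc2].
  pose (c0 := max c1 c2).
  pose (M := fsum Q (fun q => X 0 q) + (fsum Q rho + 1) + fsum Q Cq).
  pose (u := fun c q => X (sc (c + c0)%nat) q / sc (c + c0)%nat).
  assert (Hu0 : forall c q, (q < Q)%nat -> 0 <= u c q).
  { intros c q Hq. unfold u. apply div_nonneg; [apply HX_nonneg; auto; apply Hs| apply Hs]. }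
  assert (HuM : forall c q, (q < Q)%nat -> Rabs (u c q) <= M).
  { intros c q Hq. rewrite Rabs_right by (apply Rle_ge, Hu0; auto).
    eapply Rle_trans; [apply (fsum_nonneg_le Q (u c) q); auto|].
    assert (Hs1 : 1 <= sc (c + c0)%nat) by (apply Hc1; lia).
    specialize (Hc2 (c + c0)%nat ltac:(lia)). unfold Rdist in Hc2.
    assert (Hc2' : fsum Q (fun q => N (sc (c + c0)%nat) q / sc (c + c0)%nat) <= fsum Q rho + 1).
    { revert Hc2. unfold Rabs; destruct Rcase_abs; intros; lra. }
    apply Rle_trans with (fsum Q (fun q => X 0 q + N (sc (c + c0)%nat) q / sc (c + c0)%nat + Cq q)).
    - apply fsum_le. intros i Hi. unfold u.
      set (s := sc (c + c0)%nat) in *.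
      assert (Hw : s * / s = 1) by (field; lra).
      assert (0 < / s <= 1).
      { split. apply Rinv_0_lt_compat; lra. rewrite <- Rinv_1. apply Rinv_le_contravar; lra. }
      specialize (HXb s i ltac:(lra) Hi).
      assert (0 <= X 0 i) by (apply HX_nonneg; auto; lra).
      unfold Rdiv.
      assert (H1 : X s i * / s <= (X 0 i + N s i + Cq i * s) * / s) by (apply Rmult_le_compat_r; lra).
      replace ((X 0 i + N s i + Cq i * s) * / s) with (X 0 i * / s + N s i * / s + Cq i * (s * / s)) in H1 by ring.
      rewrite Hw in H1.
      assert (X 0 i * / s <= X 0 i) by nra.
      lra.
    - assert (Ef : fsum Q (fun q => X 0 q + N (sc (c + c0)%nat) q / sc (c + c0)%nat + Cq q) =
        fsum Q (fun q => X 0 q) + fsum Q (fun q => N (sc (c + c0)%nat) q / sc (c + c0)%nat) + fsum Q Cq)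
        by (rewrite !fsum_plus; reflexivity).
      rewrite Ef. unfold M. lra. }
  destruct (BWQ u Q M HuM) as [phi' [psi [Hphi' Hpsi]]].
  pose (phi := fun d => (phi' d + c0)%nat).
  assert (Hphi : incr phi) by (intros d; unfold phi; specialize (Hphi' d); lia).
  assert (Hcvpsi : forall q, (q < Q)%nat -> Un_cv (fun d => X (sc (phi d)) q / sc (phi d)) (psi q)) by exact Hpsi.
  assert (Hpsi0 : forall q, (q < Q)%nat -> 0 <= psi q).
  { intros q Hq. apply (cv_le0 _ _ (fun d => Hu0 (phi' d) q Hq) (Hpsi q Hq)). }
  assert (Hdpsi : dot Q psi b * (1 - eps) = L).
  { apply (UL_sequence (fun d => dot Q (fun q => X (sc (phi d)) q / sc (phi d)) b * (sc (phi d) / tc (phi d)))).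
    - apply CV_mult. apply cv_dot; auto. apply (cv_sub (fun c => sc c / tc c)); auto.
    - apply cv_ext_ev with (c0 := c1) (u := fun d => dot Q (X (sc (phi d))) b / tc (phi d)).
      + intros d Hd. assert (1 <= sc (phi d)) by (apply Hc1; pose proof (incr_ge phi Hphi d); lia).
        pose proof (Htpos (phi d)). rewrite dot_div. field. split; apply Rgt_not_eq; lra.
      + apply (cv_sub (fun c => dot Q (X (sc c)) b / tc c)); auto. }
  assert (Hgt1 : dot Q psi b > a) by nra.
  assert (Hgt2 : dot Q psi (mulmv Q B psi) > a).
  { pose proof (psd Q B HB_pd (fun q => psi q - eta q)) as Hp. rewrite quad_expand in Hp by auto.
    change (mulmv Q B eta) with b in Hp. change (dot Q eta b) with a in Hp. lra. }
  split.
  - exists phi, psi. split; [exact Hphi|]. split; [exact Hpsi0|]. split; [exact Hcvpsi|].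
    split; [exact Hgt1|exact Hgt2].
  - exists ((a + dot Q psi (mulmv Q B psi)) / 2). change (dot Q eta (mulmv Q B eta)) with a.
    split; [lra|]. intros T.
    pose proof (cv_quad Q B (fun d q => X (sc (phi d)) q / sc (phi d)) psi Hcvpsi) as Hq.
    destruct (Hq ((dot Q psi (mulmv Q B psi) - a) / 2) ltac:(lra)) as [d1 Hd1].
    destruct (Hsinf T) as [c3 Hc3].
    exists (sc (phi (max d1 c3))). split.
    + apply Hc3. pose proof (incr_ge phi Hphi (max d1 c3)); lia.
    + specialize (Hd1 (max d1 c3) ltac:(lia)). unfold Rdist in Hd1. cbv beta.
      revert Hd1; unfold Rabs; destruct Rcase_abs; intros; lra.
Qed.
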